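(* Let $p,q\ge1$, $n=p+q$. For every $s\in\mathfrak{S}_{p,q}$, $\widetilde\alpha(Q_{p,q}(s))=T_s$ and $\widetilde\beta(T_s)=s$.
   Context: $\mathfrak{S}_n$ is generated by $s_i=(i,i+1)$; products are composed so that $(\sigma\tau)(x)=\tau(\sigma(x))$. $\mathfrak{S}_{p,q}$ is the set of $\sigma\in\mathfrak{S}_{p+q}$ with $\sigma^{-1}(1)<\cdots<\sigma^{-1}(p)$ and $\sigma^{-1}(p+1)<\cdots<\sigma^{-1}(p+q)$. Bubble decomposition: every $\sigma\in\mathfrak{S}_n$ factors uniquely as $\sigma=\sigma^{(n-1)}\cdots\sigma^{(1)}$ with $\sigma^{(k)}\in\{e,s_k,s_{k-1}s_k,\dots,s_1\cdots s_k\}$; $t_k(\sigma)=t$ if $\sigma^{(k)}=s_t\cdots s_k$, $t_k(\sigma)=0$ if $\sigma^{(k)}=e$, and $t_n(\sigma)=0$. $\operatorname{GVB}_n^+$ is the monoid generated by $\sigma_1,\dots,\sigma_{n-1},\xi_1,\dots,\xi_{n-1}$ subject to: for $|i-j|>1$, $\sigma_i\sigma_j=\sigma_j\sigma_i$, $\sigma_i\xi_j=\xi_j\sigma_i$, $\xi_i\xi_j=\xi_j\xi_i$; for $1\le i\le n-2$, $\sigma_i\sigma_{i+1}\sigma_i=\sigma_{i+1}\sigma_i\sigma_{i+1}$, $\xi_i\xi_{i+1}\xi_i=\xi_{i+1}\xi_i\xi_{i+1}$, $\xi_i\sigma_{i+1}\sigma_i=\sigma_{i+1}\sigma_i\xi_{i+1}$,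 $\xi_{i+1}\sigma_i\sigma_{i+1}=\sigma_i\sigma_{i+1}\xi_i$. $\mathfrak{B}_n^+$ is the positive braid monoid on $\sigma_1,\dots,\sigma_{n-1}$. $\widetilde\alpha:\mathbb{K}[\operatorname{GVB}_n^+]\to\mathbb{K}[\mathfrak{B}_n^+]$ is the algebra quotient by the ideal generated by all $\xi_i$ ($\sigma_i\mapsto\sigma_i$, $\xi_i\mapsto0$), and $\widetilde\beta:\mathbb{K}[\mathfrak{B}_n^+]\to\mathbb{K}[\mathfrak{S}_n]$ is the quotient by the ideal generated by all $\sigma_i^2-1$ ($\sigma_i\mapsto s_i$). Matsumoto–Tits section: for $s\in\mathfrak{S}_n$ with reduced expression $s=s_{i_1}\cdots s_{i_l}$, $T_s=\sigma_{i_1}\cdots\sigma_{i_l}\in\mathfrak{B}_n^+$ (independent of the reduced expression). For $s\in\mathfrak{S}_{p,q}$ with $t_k=t_k(s)$, $$Q_{p,q}(s)=\prod_{k=n-1,\dots,1;\ s^{(k)}\neq e}\big(\sigma_{t_k}+(1-\delta_{t_k+1,t_{k+1}})\sigma_1\cdots\sigma_{t_k-1}\xi_{t_k}\big)\sigma_{t_k+1}\cdots\sigma_k\in\mathbb{K}[\operatorname{GVB}_n^+],$$ factors ordered with $k$ decreasing from left to right, $\delta$ the Kronecker delta, empty products equal to $e$. *)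

(* Defs.v *)
From HB Require Import structures.
From mathcomp Require Import all_boot all_order all_algebra all_fingroup.
From mathcomp Require Import boolp.
Set Implicit Arguments. Unset Strict Implicit. Unset Printing Implicit Defensive.
Import GRing.Theory.

Inductive cong {A : Type} (R : seq A -> seq A -> Prop) : seq A -> seq A -> Prop :=
| cong_step l u v r : R u v -> cong R (l ++ u ++ r) (l ++ v ++ r)
| cong_refl u : cong R u u
| cong_sym u v : cong R u v -> cong R v u
| cong_trans u v w : cong R u v -> cong R v w -> cong R u w.

(* A formal K-linear combination of words; it represents an element of the
   monoid algebra K[<A | R>] via the projection words -> monoid. *)
Definition malg_coeff (K : fieldType) (A : Type) (R : seq A -> seq A -> Prop)
  (a : seq (K * seq A)) (w : seq A) : K :=
  (\sum_(x <- a) (if `[< cong R x.2 w >] then x.1 else 0))%R.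

Definition malg_eq (K : fieldType) (A : Type) (R : seq A -> seq A -> Prop)
  (a b : seq (K * seq A)) : Prop :=
  forall w, malg_coeff R a w = malg_coeff R b w.

Definition lc_mul (K : fieldType) (A : Type) (a b : seq (K * seq A)) :
  seq (K * seq A) := [seq ((x.1 * y.1)%R, x.2 ++ y.2) | x <- a, y <- b].
Definition lc_one (K : fieldType) (A : Type) : seq (K * seq A) := [:: (1%R, [::])].

Definition braid_rel (n : nat) (u v : seq nat) : Prop :=
  (exists i j, [/\ 0 < i < n, 0 < j < n, (i.+1 < j) || (j.+1 < i),
                  u = [:: i; j] & v = [:: j; i]])
  \/ (exists i, [/\ 0 < i, i.+1 < n, u = [:: i; i.+1; i] & v = [:: i.+1; i; i.+1]]).

Inductive gvb_letter := Sig of nat | Xi of nat.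

Definition gvb_rel (n : nat) (u v : seq gvb_letter) : Prop :=
  (exists i j, [/\ 0 < i < n, 0 < j < n, (i.+1 < j) || (j.+1 < i) &
     [\/ u = [:: Sig i; Sig j] /\ v = [:: Sig j; Sig i],
         u = [:: Sig i; Xi j] /\ v = [:: Xi j; Sig i] |
         u = [:: Xi i; Xi j] /\ v = [:: Xi j; Xi i]]])
  \/ (exists i, [/\ 0 < i, i.+1 < n &
     [\/ u = [:: Sig i; Sig i.+1; Sig i] /\ v = [:: Sig i.+1; Sig i; Sig i.+1],
         u = [:: Xi i; Xi i.+1; Xi i] /\ v = [:: Xi i.+1; Xi i; Xi i.+1],
         u = [:: Xi i; Sig i.+1; Sig i] /\ v = [:: Sig i.+1; Sig i; Xi i.+1] |
         u = [:: Xi i.+1; Sig i; Sig i.+1] /\ v = [:: Sig i; Sig i.+1; Xi i]]]).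

(* alpha~ : K[GVB_n^+] -> K[B_n^+], sigma_i |-> sigma_i, xi_i |-> 0,
   computed on representatives *)
Definition is_sig (x : gvb_letter) : bool := if x is Sig _ then true else false.
Definition unsig (x : gvb_letter) : nat := match x with Sig i => i | Xi i => i end.
Definition alpha_t (K : fieldType) (a : seq (K * seq gvb_letter)) : seq (K * seq nat) :=
  [seq (x.1, map unsig x.2) | x <- a & all is_sig x.2].

(* ---------- Symmetric group (mathcomp: (s * t) x = t (s x)) ---------- *)
(* s_i = (i, i+1) in 1-based notation, i.e. tperm (i-1) i on 'I_n *)
Definition sgen (n i : nat) : 'S_n :=
  match n return 'S_n with
  | 0 => 1%g
  | m.+1 => tperm (inord i.-1 : 'I_m.+1) (inord i)
  end.
Definition perm_of_word (n : nat) (w : seq nat) : 'S_n := (\prod_(i <- w) sgen n i)%g.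

Definition gen_word (n : nat) (w : seq nat) : bool := all (fun i => 0 < i < n) w.

Definition reduced_word (n : nat) (s : 'S_n) (w : seq nat) : Prop :=
  [/\ gen_word n w, perm_of_word n w = s &
      forall w', gen_word n w' -> perm_of_word n w' = s -> size w <= size w'].

(* beta~ : K[B_n^+] -> K[S_n] (group algebra as functions 'S_n -> K),
   sigma_i |-> s_i, computed on representatives *)
Definition beta_t (K : fieldType) (n : nat) (b : seq (K * seq nat)) : {ffun 'S_n -> K} :=
  [ffun g => (\sum_(x <- b | perm_of_word n x.2 == g) x.1)%R].

Definition group_elt (K : fieldType) (n : nat) (s : 'S_n) : {ffun 'S_n -> K} :=
  [ffun g => if g == s then 1%R else 0%R].

(* (p,q)-shuffles, 0-based indices *)
Definition shuffle (p q : nat) (s : 'S_(p + q)) : Prop :=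
  forall i j : 'I_(p + q), i < j -> (j < p) || (p <= i) -> (s^-1)%g i < (s^-1)%g j.

(* bubble decomposition s = s^(n-1) ... s^(1), s^(k) = s_t ... s_k (t = t k),
   or e if t k = 0; with the convention t n = 0 *)
Definition bubble_word (k t : nat) : seq nat := if t == 0 then [::] else iota t (k - t).+1.
Definition bubble_decomp (n : nat) (s : 'S_n) (t : nat -> nat) : Prop :=
  [/\ forall k, 0 < k < n -> t k <= k, t n = 0 &
      s = perm_of_word n (flatten [seq bubble_word k (t k) | k <- rev (iota 1 n.-1)])].

(* Q_{p,q}(s) as a formal combination of GVB words, given t k = t_k(s) *)
Definition Q_factor (K : fieldType) (t : nat -> nat) (k : nat) : seq (K * seq gvb_letter) :=
  let tk := t k in
  let tail := [seq Sig i | i <- iota tk.+1 (k - tk)] in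
  let c := if tk.+1 == t k.+1 then 0%R else 1%R in
  [:: (1%R, Sig tk :: tail); (c, [seq Sig i | i <- iota 1 tk.-1] ++ Xi tk :: tail)].

Definition Qpq (K : fieldType) (n : nat) (t : nat -> nat) : seq (K * seq gvb_letter) :=
  foldr (@lc_mul K _) (lc_one K _)
        [seq Q_factor K t k | k <- rev (iota 1 n.-1) & t k != 0].

(* Main.v *)
Require Import Defs.
From HB Require Import structures.
From mathcomp Require Import all_boot all_order all_algebra all_fingroup.
From mathcomp Require Import boolp.
From mathcomp Require Import zify.
Set Implicit Arguments. Unset Strict Implicit.


Lemma eq_inord m (y : 'I_m.+1) k : k <= m -> (y == inord k) = (y == k :> nat).
Proof.
move=> Hk; apply/eqP/eqP => [->|<-]; first by rewrite inordK.
by rewrite inord_val.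
Qed.

Lemma sgen_val n i (y : 'I_n) : i.+1 < n ->
  (sgen n i.+1 y : nat) = if y == i :> nat then i.+1 else if y == i.+1 :> nat then i else y.
Proof.
case: n y => [|m] y H; first by case: y.
rewrite /sgen permE /= !eq_inord //; try lia.
by case: eqP => _ /=; [rewrite inordK|case: eqP => _ /=; [rewrite inordK //; lia|]].
Qed.


Ltac split_ifs :=
  repeat match goal with
  | |- context [if ?b then _ else _] =>
      lazymatch b with context [if _ then _ else _] => fail | _ => 
      let E := fresh "E" in destruct b eqn:E end
  end;
  repeat match goal with
  | H : (_ == _) = true |- _ => move/eqP: H => H
  | H : (_ == _) = false |- _ => move/eqP: H => H
  end.

Lemma sgenK n i : i.+1 < n -> (sgen n i.+1 * sgen n i.+1 = 1)%g.
Proof.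
move=> H; apply/permP => y; apply/val_inj; rewrite /= permM perm1 !sgen_val //.
split_ifs; lia.
Qed.

Lemma sgen_comm n i j : i.+1 < n -> j.+1 < n -> (i.+1 < j) || (j.+1 < i) ->
  (sgen n i.+1 * sgen n j.+1 = sgen n j.+1 * sgen n i.+1)%g.
Proof.
move=> Hi Hj Hij; apply/permP => y; apply/val_inj; rewrite /= !permM !sgen_val //.
split_ifs; lia.
Qed.

Lemma sgen_braid n i : i.+2 < n ->
  (sgen n i.+1 * sgen n i.+2 * sgen n i.+1 = sgen n i.+2 * sgen n i.+1 * sgen n i.+2)%g.
Proof.
move=> Hi; apply/permP => y; apply/val_inj; rewrite /= !permM !sgen_val //; try lia.
split_ifs; lia.
Qed.


Definition inv {n} (x : 'S_n) : nat :=
  \sum_(pr : 'I_n * 'I_n) ((pr.1 < pr.2) && (x pr.2 < x pr.1)).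

Lemma sgen_a n i (a b : 'I_n) : i.+1 < n -> a = i :> nat -> b = i.+1 :> nat ->
  sgen n i.+1 a = b /\ sgen n i.+1 b = a.
Proof.
move=> H Ha Hb; split; apply/val_inj; rewrite /= sgen_val // Ha Hb; split_ifs; lia.
Qed.

Lemma inv_swap n i (x : 'S_n) (a b : 'I_n) : i.+1 < n -> a = i :> nat -> b = i.+1 :> nat ->
  inv (sgen n i.+1 * x)%g + (x b < x a) = inv x + (x a < x b).
Proof.
move=> H Ha Hb.
have [ta tb] := sgen_a H Ha Hb.
set tau := sgen n i.+1.
have fi : injective (fun pr : 'I_n * 'I_n => (tau pr.1, tau pr.2)).
  by move=> [u v] [u' v'] /= [/perm_inj -> /perm_inj ->].
rewrite /inv [in RHS](reindex_inj fi) /=.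
have ab : (b, a) != (a, b) by apply/eqP => -[E _]; move: (congr1 val E) => /=; lia.
rewrite (bigD1 (a,b)) //= (bigD1 (b,a)) //= [in RHS](bigD1 (a,b)) //= [in RHS](bigD1 (b,a)) //=.
rewrite !permM ta tb /= Ha Hb.
have -> : \sum_(pr | (pr != (a, b)) && (pr != (b, a)))
          ((tau pr.1 < tau pr.2) && (x (tau pr.2) < x (tau pr.1))) =
         \sum_(pr | (pr != (a, b)) && (pr != (b, a)))
          ((pr.1 < pr.2) && ((tau * x)%g pr.2 < (tau * x)%g pr.1)).
  apply: eq_bigr => -[u v] /= /andP [N1 N2]; rewrite !permM; congr (_ && _).
  rewrite /tau !sgen_val //.
  have N1' : ~ ((u : nat) = i /\ (v : nat) = i.+1).
    by move=> [E1 E2]; move/eqP: N1; apply; congr pair; apply/val_inj; rewrite /= ?E1 ?E2.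
  have N2' : ~ ((u : nat) = i.+1 /\ (v : nat) = i).
    by move=> [E1 E2]; move/eqP: N2; apply; congr pair; apply/val_inj; rewrite /= ?E1 ?E2.
  split_ifs; apply/idP/idP => ?; lia.
have -> : i.+1 < i = false by lia.
have -> : i < i.+1 by lia.
rewrite /=; move: (x a < x b) (x b < x a) => [] []; lia.
Qed.


Definition desc {n} (x : 'S_n) i :=
  forall a b : 'I_n, a = i :> nat -> b = i.+1 :> nat -> x b < x a.

Lemma desc_iff n (x : 'S_n) i (a b : 'I_n) : a = i :> nat -> b = i.+1 :> nat ->
  desc x i <-> x b < x a.
Proof.
move=> Ha Hb; split; first by move/(_ a b Ha Hb).
move=> H a' b' Ha' Hb'.
have -> : a' = a by apply/val_inj; rewrite /= Ha Ha'.
have -> : b' = b by apply/val_inj; rewrite /= Hb Hb'.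
done.
Qed.

Lemma inv_step n i (x : 'S_n) : i.+1 < n ->
  (desc x i -> inv (sgen n i.+1 * x)%g + 1 = inv x) /\
  (~ desc x i -> inv (sgen n i.+1 * x)%g = inv x + 1).
Proof.
move=> H.
have Hi : i < n by lia.
pose a := Ordinal Hi; pose b := Ordinal H.
have E := inv_swap x (a:=a) (b:=b) H erefl erefl.
have D := desc_iff x (a:=a) (b:=b) erefl erefl.
have nab : x a != x b.
  by apply/negP => /eqP /perm_inj /(congr1 val) /=; lia.
split.
  move/D => lt; move: E; rewrite lt.
  have -> : (x a < x b) = false by lia.
  simpl; lia.
move=> nd; have ge : ~~ (x b < x a) by apply/negP => /D.
move: E; rewrite (negbTE ge).
have -> : (x a < x b) = true by move: nab; rewrite neq_ltn => /orP [->|h] //; by rewrite h in ge.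
simpl; lia.
Qed.

Lemma perm_cons n a w : perm_of_word n (a :: w) = (sgen n a * perm_of_word n w)%g.
Proof. by rewrite /perm_of_word big_cons. Qed.

Lemma inv1 n : inv (1%g : 'S_n) = 0.
Proof. by apply: big1 => -[u v] _; rewrite !perm1 /=; case: ltngtP. Qed.

Lemma inv_le n w : gen_word n w -> inv (perm_of_word n w) <= size w.
Proof.
elim: w => [|a w IH] /=; first by rewrite /perm_of_word big_nil inv1.
move=> /andP [/andP [a0 an] gw]; rewrite perm_cons.
case: a a0 an => // i _ an.
have [h1 h2] := inv_step (perm_of_word n w) an.
have := IH gw.
have [d|d] := pselect (desc (perm_of_word n w) i).
  by have := h1 d; lia.
by have := h2 d; lia.
Qed.

Lemma no_desc_id n (x : 'S_n) : (forall i, i.+1 < n -> ~ desc x i) -> x = 1%g.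
Proof.
move=> nd.
have adj : forall c c' : 'I_n, c' = c.+1 :> nat -> x c < x c'.
  move=> c c' Hc.
  have Hn : (c : nat).+1 < n by rewrite -Hc.
  have nd' : ~ (x c' < x c).
    by move=> h; apply: (nd c Hn); apply/(desc_iff x (a:=c) (b:=c') erefl Hc).
  have nab : x c != x c' by apply/negP => /eqP /perm_inj /(congr1 val) /=; lia.
  move: nab; rewrite neq_ltn => /orP [] // h; by case: nd'.
have mono : forall d (u v : 'I_n), v = u + d.+1 :> nat -> x u < x v.
  elim=> [|d IH] u v Hv; first by apply: adj; rewrite Hv addn1.
  have Hw : u + d.+1 < n by move: (ltn_ord v); rewrite Hv; lia.
  apply: (ltn_trans (IH u (Ordinal Hw) erefl)); apply: adj => /=; lia.
have mono' : forall u v : 'I_n, u < v -> x u < x v.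
  move=> u v uv; apply: (mono (v - u).-1); lia.
have ge : forall (y : 'S_n), (forall u v : 'I_n, u < v -> y u < y v) ->
   forall c : 'I_n, c <= y c.
  move=> y my; suff: forall k (c : 'I_n), c = k :> nat -> k <= y c by move=> h c; exact: h.
  elim=> [//|k IH] c Hc.
  have Hk : k < n by move: (ltn_ord c); lia.
  have := IH (Ordinal Hk) erefl.
  have : y (Ordinal Hk) < y c by apply: my => /=; lia.
  lia.
have monoi : forall u v : 'I_n, u < v -> (x^-1)%g u < (x^-1)%g v.
  move=> u v uv; case: (ltngtP ((x^-1)%g u) ((x^-1)%g v)) => // h.
    have := mono' _ _ h; rewrite !permKV; lia.
  by move/val_inj/(congr1 x): h; rewrite !permKV => E; move: uv; rewrite E ltnn.
apply/permP => c; apply/val_inj; rewrite perm1 /=.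
have h1 := ge x mono' c.
have h2 := ge _ monoi (x c); rewrite permK in h2.
lia.
Qed.

Lemma exists_word n (x : 'S_n) :
  exists w, [/\ gen_word n w, perm_of_word n w = x & size w = inv x].
Proof.
move: {2}(inv x) (erefl (inv x)) => k; elim: k x => [|k IH] x Hk.
  exists [::]; split => //.
  rewrite /perm_of_word big_nil; symmetry; apply: no_desc_id => i Hi d.
  by have := (inv_step x Hi).1 d; lia.
have [[i [Hi d]]|nd] := pselect (exists i, i.+1 < n /\ desc x i).
  have := (inv_step x Hi).1 d => E.
  have [w [gw pw sw]] := IH (sgen n i.+1 * x)%g ltac:(lia).
  exists (i.+1 :: w); split => /=.
  - by rewrite gw andbT; lia.
  - by rewrite perm_cons pw mulgA sgenK // mul1g.
  - by rewrite sw; lia.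
have x1 : x = 1%g by apply: no_desc_id => i Hi d; apply: nd; exists i.
by move: Hk; rewrite x1 inv1.
Qed.

Lemma reduced_size n (s : 'S_n) w : reduced_word s w -> size w = inv s.
Proof.
move=> [gw pw mw].
have [w' [gw' pw' sw']] := exists_word s.
have := mw w' gw' pw'; have := inv_le gw; rewrite pw; lia.
Qed.


Lemma cong_cons (A : Type) (R : seq A -> seq A -> Prop) a u v :
  cong R u v -> cong R (a :: u) (a :: v).
Proof.
elim=> [l u' v' r H|u'|u' v' _ IH|u' v' w' _ IH1 _ IH2].
- exact: (cong_step (a :: l) r H).
- exact: cong_refl.
- exact: cong_sym.
- exact: cong_trans IH1 IH2.
Qed.

Lemma sgen_fix n i (c : 'I_n) : i.+1 < n -> c <> i :> nat -> c <> i.+1 :> nat ->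
  sgen n i.+1 c = c.
Proof. move=> H h1 h2; apply/val_inj; rewrite /= sgen_val //; split_ifs; lia. Qed.

Definition red {n} (s : 'S_n) w :=
  [/\ gen_word n w, perm_of_word n w = s & size w = inv s].

Lemma red_cons n k (y : 'S_n) w : k.+1 < n -> desc y k ->
  red (sgen n k.+1 * y)%g w -> red y (k.+1 :: w).
Proof.
move=> Hk d [gw pw sw]; split => /=.
- by rewrite gw andbT; lia.
- by rewrite perm_cons pw mulgA sgenK // mul1g.
- by rewrite sw; have := (inv_step y Hk).1 d; lia.
Qed.

Lemma red_desc n k (s : 'S_n) w : red s (k.+1 :: w) ->
  [/\ k.+1 < n, desc s k & red (sgen n k.+1 * s)%g w].
Proof.
move=> [/= /andP [Hk gw] pw sw].
have pw1 : perm_of_word n w = (sgen n k.+1 * s)%g.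
  by rewrite -pw perm_cons mulgA sgenK // mul1g.
have le := inv_le gw; rewrite pw1 in le.
have [d|nd] := pselect (desc s k).
  split => //; split => //; have := (inv_step s Hk).1 d; move: sw => /=; lia.
by have := (inv_step s Hk).2 nd; move: sw => /=; lia.
Qed.

Lemma mul_sgen_val n i (x : 'S_n) (a b : 'I_n) : i.+1 < n -> a = i :> nat -> b = i.+1 :> nat ->
  [/\ (sgen n i.+1 * x)%g a = x b, (sgen n i.+1 * x)%g b = x a &
      forall c : 'I_n, c <> i :> nat -> c <> i.+1 :> nat -> (sgen n i.+1 * x)%g c = x c].
Proof.
move=> H Ha Hb; have [ta tb] := sgen_a H Ha Hb.
by split; [rewrite permM ta|rewrite permM tb|move=> c h1 h2; rewrite permM sgen_fix].
Qed.

Lemma desc_far n i j (s : 'S_n) : i.+1 < n -> j.+1 < n -> (i.+1 < j) || (j.+1 < i) ->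
  desc s j -> desc (sgen n i.+1 * s)%g j.
Proof.
move=> Hi Hj Hij d a b Ha Hb.
have Hi' : i < n by lia.
have [_ _ f] := mul_sgen_val s (a:=Ordinal Hi') (b:=Ordinal Hi) Hi erefl erefl.
rewrite !f; try lia; exact: d.
Qed.

Lemma desc_adj n i (s : 'S_n) : i.+2 < n -> desc s i -> desc s i.+1 ->
  [/\ desc (sgen n i.+1 * s)%g i.+1, desc (sgen n i.+2 * (sgen n i.+1 * s))%g i,
      desc (sgen n i.+2 * s)%g i & desc (sgen n i.+1 * (sgen n i.+2 * s))%g i.+1].
Proof.
move=> H d1 d2.
have H1 : i < n by lia. have H2 : i.+1 < n by lia.
pose A := Ordinal H1; pose B := Ordinal H2; pose C := Ordinal H.
have dAB := (desc_iff s (a:=A) (b:=B) erefl erefl).1 d1.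
have dBC := (desc_iff s (a:=B) (b:=C) erefl erefl).1 d2.
have [e1 e2 e3] := mul_sgen_val s (a:=A) (b:=B) H2 erefl erefl.
have [f1 f2 f3] := mul_sgen_val s (a:=B) (b:=C) H erefl erefl.
have [g1 g2 g3] := mul_sgen_val (sgen n i.+1 * s)%g (a:=B) (b:=C) H erefl erefl.
have [h1 h2 h3] := mul_sgen_val (sgen n i.+2 * s)%g (a:=A) (b:=B) H2 erefl erefl.
split.
- apply/(desc_iff _ (a:=B) (b:=C) erefl erefl); rewrite e2 e3 //= ; lia.
- apply/(desc_iff _ (a:=A) (b:=B) erefl erefl); rewrite g1 g3 //= ?e1 ?e2 ?e3 //=; lia.
- apply/(desc_iff _ (a:=A) (b:=B) erefl erefl); rewrite f1 f3 //=; lia.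
- apply/(desc_iff _ (a:=B) (b:=C) erefl erefl); rewrite h2 h3 //= ?f1 ?f2 ?f3 //=; lia.
Qed.


Lemma matsumoto n L : forall (s : 'S_n) w w', inv s <= L -> red s w -> red s w' ->
  cong (braid_rel n) w w'.
Proof.
elim: L => [|L IH] s w w' HL rw rw'.
  have [_ _ s1] := rw; have [_ _ s2] := rw'.
  clear rw rw'; case: w s1 => [|? ?] /= s1; last lia.
  case: w' s2 => [|? ?] /= s2; last lia.
  exact: cong_refl.
case: w rw => [|a w1] rw; case: w' rw' => [|b w2] rw'.
- exact: cong_refl.
- by have [_ _ s1] := rw; have [_ _ s2] := rw'; move: s1 s2 => /= ; lia.
- by have [_ _ s1] := rw; have [_ _ s2] := rw'; move: s1 s2 => /= ; lia.
have key : forall i j w1 w2, i <= j -> red s (i.+1 :: w1) -> red s (j.+1 :: w2) ->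
    cong (braid_rel n) (i.+1 :: w1) (j.+1 :: w2).
  move=> i j u1 u2 ij r1 r2.
  have [Hi di ru1] := red_desc r1; have [Hj dj ru2] := red_desc r2.
  have Hinv := (inv_step s Hi).1 di.
  have Hinvj := (inv_step s Hj).1 dj.
  have [eij|{}ij] : i = j \/ i < j by lia.
    subst j; apply: cong_cons; apply: (IH _ _ _ _ ru1 ru2); lia.
  have [far|adj] := boolP (i.+1 < j).
  - have Hfar : (i.+1 < j) || (j.+1 < i) by rewrite far.
    have Hfar' : (j.+1 < i) || (i.+1 < j) by rewrite far orbT.
    have d1 := desc_far Hi Hj Hfar dj.
    have d2 := desc_far Hj Hi Hfar' di.
    have [v rv] := exists_word (sgen n j.+1 * (sgen n i.+1 * s))%g.
    have rv' : red (sgen n i.+1 * (sgen n j.+1 * s))%g v.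
      by rewrite mulgA sgen_comm // -mulgA.
    have c1 := IH (sgen n i.+1 * s)%g _ _ ltac:(lia) ru1 (red_cons Hj d1 rv).
    have c2 := IH (sgen n j.+1 * s)%g _ _ ltac:(lia) ru2 (red_cons Hi d2 rv').
    apply: cong_trans (cong_cons i.+1 c1) _.
    apply: cong_trans _ (cong_sym (cong_cons j.+1 c2)).
    apply: (cong_step [::] v (u:=[:: i.+1; j.+1]) (v:=[:: j.+1; i.+1])).
    left; exists i.+1, j.+1; split => //; lia.
  have ej : j = i.+1 by lia.
  subst j.
  have [e1 e2 e3 e4] := desc_adj Hj di dj.
  have [v rv] := exists_word (sgen n i.+1 * (sgen n i.+2 * (sgen n i.+1 * s)))%g.
  have rv' : red (sgen n i.+2 * (sgen n i.+1 * (sgen n i.+2 * s)))%g v.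
    by rewrite !mulgA -sgen_braid // -!mulgA; exact: rv.
  have r1' := red_cons Hj e1 (red_cons Hi e2 rv).
  have r2' := red_cons Hi e3 (red_cons Hj e4 rv').
  have c1 := IH (sgen n i.+1 * s)%g _ _ ltac:(lia) ru1 r1'.
  have c2 := IH (sgen n i.+2 * s)%g _ _ ltac:(lia) ru2 r2'.
  apply: cong_trans (cong_cons i.+1 c1) _.
  apply: cong_trans _ (cong_sym (cong_cons i.+2 c2)).
  apply: (cong_step [::] v (u:=[:: i.+1; i.+2; i.+1]) (v:=[:: i.+2; i.+1; i.+2])).
  right; exists i.+1; split => //.
case: a rw => [|i] rw; first by case: rw.
case: b rw' => [|j] rw'; first by case: rw'.
case: (leqP i j) => ij; first exact: key.
apply: cong_sym; apply: key => //; lia.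
Qed.


Lemma perm_cat n w1 w2 : perm_of_word n (w1 ++ w2) = (perm_of_word n w1 * perm_of_word n w2)%g.
Proof. by rewrite /perm_of_word big_cat. Qed.

Lemma perm_nil n : perm_of_word n [::] = 1%g.
Proof. by rewrite /perm_of_word big_nil. Qed.

Lemma fix_word n M w : gen_word n w -> all (fun a => a <= M) w ->
  forall c : 'I_n, M < c -> perm_of_word n w c = c.
Proof.
elim: w => [|a w IH] /=; first by move=> _ _ c _; rewrite perm_nil perm1.
move=> /andP [/andP [a0 an] gw] /andP [aM aw] c Hc.
rewrite perm_cons permM; case: a a0 an aM => // i _ an aM.
by rewrite sgen_fix //; try lia; apply: IH.
Qed.

Lemma iotaSr m k : iota m k.+1 = iota m k ++ [:: m + k].
Proof. by rewrite -addn1 iotaD. Qed.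

Lemma chain n d : forall j (y : 'S_n), j < n -> d <= j ->
  (forall c c' : 'I_n, c' = j :> nat -> c < j -> y c < y c') ->
  inv (perm_of_word n (iota (j.+1 - d) d) * y)%g = inv y + d.
Proof.
elim: d => [|d IH] j y Hj Hd cond; first by rewrite perm_nil mul1g addn0.
case: j Hj Hd cond => [|i] Hj Hd cond; first lia.
have -> : iota (i.+2 - d.+1) d.+1 = iota (i.+1 - d) d ++ [:: i.+1].
  by rewrite iotaSr; congr (_ ++ [:: _]); lia.
rewrite perm_cat /perm_of_word big_seq1 -mulgA -/(perm_of_word n _).
have Hi : i < n by lia.
have nd : ~ desc y i.
  by move/(desc_iff y (a:=Ordinal Hi) (b:=Ordinal Hj) erefl erefl); have := cond (Ordinal Hi) (Ordinal Hj) erefl (ltnSn i); lia.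
have E := (inv_step y Hj).2 nd.
have [f1 f2 f3] := mul_sgen_val y (a:=Ordinal Hi) (b:=Ordinal Hj) Hj erefl erefl.
rewrite (IH i) //; try lia.
  by rewrite E; lia.
move=> c c' Hc' Hc; have -> : c' = Ordinal Hi by apply/val_inj.
rewrite f1 f3; try lia; apply: cond => //=; lia.
Qed.

Definition Uw (t : nat -> nat) m := flatten [seq bubble_word k (t k) | k <- rev (iota 1 m)].

Lemma Uw_red n (t : nat -> nat) m : m < n -> (forall k, 0 < k < n -> t k <= k) ->
  [/\ gen_word n (Uw t m), all (fun a => a <= m) (Uw t m)
    & inv (perm_of_word n (Uw t m)) = size (Uw t m)].
Proof.
move=> + ht; elim: m => [|m IH] Hm; first by rewrite /Uw /= perm_nil inv1.
have [g1 a1 i1] := IH ltac:(lia).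
have -> : Uw t m.+1 = bubble_word m.+1 (t m.+1) ++ Uw t m.
  by rewrite /Uw iotaSr rev_cat /= add1n.
set x := perm_of_word n (Uw t m).
have fx : forall c : 'I_n, m < c -> x c = c by apply: fix_word g1 a1.
have htk := ht m.+1 ltac:(lia).
rewrite /bubble_word; case: (t m.+1 =P 0) => [E|tk0].
  rewrite /=; split => //; apply: sub_all a1 => a /=; lia.
have gb : gen_word n (iota (t m.+1) (m.+1 - t m.+1).+1).
  apply/allP => a; rewrite mem_iota; lia.
have ab : all (fun a => a <= m.+1) (iota (t m.+1) (m.+1 - t m.+1).+1).
  apply/allP => a; rewrite mem_iota /=; lia.
split.
- by move: gb g1; rewrite /gen_word all_cat => -> ->.
- by rewrite all_cat ab /=; apply: sub_all a1 => a /=; lia.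
rewrite perm_cat size_cat size_iota -i1.
set d := (m.+1 - t m.+1).+1.
have -> : t m.+1 = m.+2 - d by rewrite /d; lia.
rewrite (chain (j:=m.+1)) //; first lia; first lia.
move=> c c' Hc' Hc.
have -> : x c' = c' by apply: fx; lia.
rewrite Hc'; case: (ltnP (x c) m.+1) => // h.
have fxc := fx (x c) h.
move/perm_inj: fxc => E.
by move: Hc; rewrite -E; lia.
Qed.

Import GRing.Theory.

Lemma all_sig_map (l : seq nat) : all is_sig [seq Sig i | i <- l].
Proof. by elim: l. Qed.

Lemma unsig_map (l : seq nat) : map unsig [seq Sig i | i <- l] = l.
Proof. by elim: l => //= a l ->. Qed.

Lemma alpha_step (K : fieldType) (t : nat -> nat) k (R : seq (K * seq gvb_letter)) :
  t k != 0 ->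
  alpha_t (lc_mul (Q_factor K t k) R) =
  [seq (z.1, bubble_word k (t k) ++ z.2) | z <- alpha_t R].
Proof.
move=> tk.
rewrite /lc_mul /Q_factor /= /alpha_t !filter_cat !map_cat cats0.
rewrite [X in _ ++ X = _](_ : _ = [::]); last first.
  rewrite filter_map /=; set f := (fun _ => _).
  rewrite (eq_filter (a2 := pred0)) ?filter_pred0 // => y.
  by rewrite /= !all_cat /= andbF.
rewrite cats0 filter_map /= -map_comp map_comp.
rewrite (eq_filter (a2 := fun y => all is_sig y.2)); last first.
  by move=> y /=; rewrite all_cat all_sig_map.
rewrite -!map_comp; apply: eq_map => y /=.
by rewrite mul1r map_cat unsig_map /bubble_word (negbTE tk).
Qed.

Lemma alpha_Q (K : fieldType) (t : nat -> nat) (l : seq nat) :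
  alpha_t (foldr (@lc_mul K _) (lc_one K _) [seq Q_factor K t k | k <- l & t k != 0]) =
  [:: (1%R, flatten [seq bubble_word k (t k) | k <- l])].
Proof.
elim: l => [|k l IH] //=.
case: ifP => tk /=.
  by rewrite alpha_step ?tk // IH.
by rewrite IH /bubble_word; move/negbFE: tk => ->.
Qed.

Lemma gvb_rel_inv n u v : gvb_rel n u v ->
  all is_sig u = all is_sig v /\ (all is_sig u -> braid_rel n (map unsig u) (map unsig v)).
Proof.
case=> [[i [j [Hi Hj Hij []]]] | [i [Hi Hi2 []]]] [-> ->] //=; split => // _.
- by left; exists i, j.
- by right; exists i.
Qed.

Lemma cong_gvb n u v : cong (gvb_rel n) u v ->
  all is_sig u = all is_sig v /\ (all is_sig u -> cong (braid_rel n) (map unsig u) (map unsig v)).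
Proof.
elim=> [l u' v' r H|u'|u' v' _ [IH1 IH2]|u' v' w' _ [IH1 IH2] _ [IH3 IH4]].
- have [E1 E2] := gvb_rel_inv H.
  rewrite !all_cat E1; split => // /and3P [_ au _].
  rewrite !map_cat; apply: cong_step; apply: E2; by rewrite E1.
- by split => // _; exact: cong_refl.
- split => // au; apply: cong_sym; apply: IH2; by rewrite IH1.
- split; first by rewrite IH1.
  move=> au; apply: cong_trans (IH2 au) (IH4 _); by rewrite -IH1.
Qed.

Lemma cong_braid n u v : cong (braid_rel n) u v ->
  cong (gvb_rel n) [seq Sig i | i <- u] [seq Sig i | i <- v].
Proof.
elim=> [l u' v' r H|u'|u' v' _ IH|u' v' w' _ IH1 _ IH2].
- rewrite !map_cat; apply: cong_step.
  case: H => [[i [j [Hi Hj Hij -> ->]]]|[i [Hi Hi2 -> ->]]].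
    by left; exists i, j; split => //; apply: Or31.
  by right; exists i; split => //; apply: Or41.
- exact: cong_refl.
- exact: cong_sym.
- exact: cong_trans IH1 IH2.
Qed.

Lemma sig_unsig (u : seq gvb_letter) : all is_sig u -> [seq Sig i | i <- map unsig u] = u.
Proof. by elim: u => [|[i|i] u IH] //= /IH ->. Qed.

Lemma coeff_alpha (K : fieldType) n (a : seq (K * seq gvb_letter)) w :
  malg_coeff (braid_rel n) (alpha_t a) w = malg_coeff (gvb_rel n) a [seq Sig i | i <- w].
Proof.
rewrite /malg_coeff /alpha_t big_map big_filter big_mkcond /=.
apply: eq_bigr => x _.
case: ifP => sx.
  congr (if _ then _ else _); apply: asbool_equiv_eq; split.
    by move/cong_braid; rewrite sig_unsig.
  by move/cong_gvb => [_ /(_ sx)]; rewrite unsig_map.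
case: asboolP => // /cong_gvb [E _].
by move: sx; rewrite E all_sig_map.
Qed.

Lemma braid_perm n u v : cong (braid_rel n) u v -> perm_of_word n u = perm_of_word n v.
Proof.
elim=> [l u' v' r H|u'|u' v' _ IH|u' v' w' _ IH1 _ IH2] //.
- rewrite !perm_cat; congr (_ * (_ * _))%g.
  case: H => [[i [j [Hi Hj Hij -> ->]]]|[i [Hi Hi2 -> ->]]].
    rewrite /perm_of_word !big_cons !big_nil !mulg1.
    case: i Hi Hij => [|i] Hi Hij; first lia.
    case: j Hj Hij => [|j] Hj Hij; first lia.
    apply: sgen_comm; lia.
  rewrite /perm_of_word !big_cons !big_nil !mulg1 !mulgA.
  case: i Hi Hi2 => [|i] Hi Hi2; first lia.
  exact: sgen_braid.
- by rewrite IH1 IH2.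
Qed.

Definition Cr (K : fieldType) (A : Type) (R : seq A -> seq A -> Prop) (r : seq A)
  (x : K * seq A) := `[< cong R x.2 r >].

Lemma coeff_filter (K : fieldType) (A : Type) (R : seq A -> seq A -> Prop) r
  (c : seq (K * seq A)) w :
  malg_coeff R [seq y <- c | ~~ Cr R r y] w =
  if `[< cong R r w >] then 0%R else malg_coeff R c w.
Proof.
rewrite /malg_coeff big_filter; case: asboolP => rw.
  apply: big1 => x /asboolPn cx; case: asboolP => // xw; case: cx.
  exact: cong_trans xw (cong_sym rw).
rewrite big_mkcond; apply: eq_bigr => x _; rewrite /Cr.
case: asboolP => //= xr; case: asboolP => // xw; case: rw.
exact: cong_trans (cong_sym xr) xw.
Qed.

Lemma sum_inv (K : fieldType) (A : Type) (R : seq A -> seq A -> Prop) (P : seq A -> bool)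
  (a b : seq (K * seq A)) :
  (forall u v, cong R u v -> P u = P v) -> malg_eq R a b ->
  (\sum_(x <- a | P x.2) x.1 = \sum_(x <- b | P x.2) x.1)%R.
Proof.
move=> HP; move: {2}(size a + size b) (leqnn (size a + size b)) => N.
elim: N a b => [|N IH] a b HN Heq.
  by case: a b HN Heq => [|? ?] [|? ?].
have split_sum : forall r (c : seq (K * seq A)),
  (\sum_(x <- c | P x.2) x.1 = (if P r then malg_coeff R c r else 0) +
     \sum_(x <- [seq y <- c | ~~ Cr R r y] | P x.2) x.1)%R.
  move=> r c; rewrite (bigID (Cr R r)) /= big_filter_cond; congr (_ + _)%R; last by apply: eq_bigl => x; rewrite andbC.
  rewrite /malg_coeff; case: ifP => Pr.
    rewrite [in RHS]big_mkcond [in LHS]big_mkcond /=; apply: eq_bigr => x _.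
    rewrite /Cr; case: asboolP => cx; last by rewrite andbF; case: (P x.2).
    by rewrite andbT (HP _ _ cx) Pr.
  apply: big1 => x /andP [px /asboolP cx]; move: px; by rewrite (HP _ _ cx) Pr.
have step : forall r, size [seq y <- a | ~~ Cr R r y] + size [seq y <- b | ~~ Cr R r y] <= N ->
   (\sum_(x <- a | P x.2) x.1 = \sum_(x <- b | P x.2) x.1)%R.
  move=> r Hs; rewrite (split_sum r a) (split_sum r b) (Heq r); congr (_ + _)%R.
  apply: IH => // w; rewrite !coeff_filter; by rewrite (Heq w).
have Hf : forall r (c : seq (K * seq A)), size [seq y <- c | ~~ Cr R r y] <= size c.
  by move=> r c; rewrite size_filter count_size.
have Cx : forall x : K * seq A, Cr R x.2 x by move=> x; apply/asboolP; exact: cong_refl.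
case: a HN Heq step => [|x a'] HN Heq step.
  case: b HN Heq step => [|y b'] HN Heq step; first by [].
  apply: (step y.2); rewrite /= Cx /=; have := Hf y.2 b'; move: HN => /=; lia.
apply: (step x.2); rewrite /= Cx /=; have := Hf x.2 a'; have := Hf x.2 b; move: HN => /=; lia.
Qed.

Unset Implicit Arguments. Set Strict Implicit.

Theorem lemma4 (K : fieldType) (p q : nat) (s : 'S_(p + q)) (t : nat -> nat) :
  0 < p -> 0 < q -> shuffle s -> bubble_decomp s t ->
  forall w : seq nat, reduced_word s w ->
    (forall a, malg_eq (gvb_rel (p + q)) a (Qpq K (p + q) t) ->
       malg_eq (braid_rel (p + q)) (alpha_t a) [:: (1%R, w)])
    /\ (forall b, malg_eq (braid_rel (p + q)) b [:: (1%R, w)] ->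
       beta_t (p + q) b = group_elt K s).
Proof.
move=> Hp Hq _ [ht _ ps] w rw.
have [gu _ iu] := Uw_red (n := p + q) (t := t) (m := (p + q).-1) ltac:(lia) ht.
have ru : red s (Uw t (p + q).-1) by split => //; rewrite ps.
have rw' : red s w.
  by have [gw pw _] := rw; split => //; exact: reduced_size.
have cuw := matsumoto (leqnn (inv s)) ru rw'.
split.
  move=> a Ha w'.
  rewrite coeff_alpha Ha -coeff_alpha /Qpq alpha_Q -/(Uw t (p + q).-1).
  rewrite /malg_coeff !big_cons !big_nil /=; congr (_ + _)%R; congr (if _ then _ else _).
  apply: asbool_equiv_eq; split => h.
    exact: cong_trans (cong_sym cuw) h.
  exact: cong_trans cuw h.
move=> b Hb; apply/ffunP => g; rewrite !ffunE.
rewrite (sum_inv (P := fun v => perm_of_word (p + q) v == g) _ Hb); last first.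
  by move=> u v /braid_perm ->.
have [_ pw _] := rw.
by rewrite big_cons big_nil /= pw eq_sym; case: (g == s); rewrite ?GRing.addr0.
Qed.
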